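(* Let $bTL_n(q)$ be the quotient of $bH_n(q)$ by the two-sided ideal generated by the Steinberg elements $z_{i,j}=e_ie_j(1+qz_i+qz_j+q^2z_iz_j+q^2z_jz_i+q^3z_iz_jz_i)$, $|i-j|=1$, and put $d_i=q^{-1}e_i+z_i$. Then $bTL_n(q)$ is presented by generators $e_1,\ldots,e_{n-1}$ and $d_1,\ldots,d_{n-1}$ subject to: $e_i^2=e_i$, $e_ie_j=e_je_i$; $d_i^2=(q+q^{-1})d_i$; $d_id_jd_i=e_jd_ie_j$ for $|i-j|=1$; $d_id_j=d_jd_i$ for $|i-j|>1$; $d_ie_i=d_i$; $d_ie_j=e_jd_i$ for all $i,j$.
   Context: $\mathbb{S}=\mathbb{C}[q,q^{-1}]$. The tied--boxed Hecke algebra $bH_n(q)$ is the $\mathbb{S}$--algebra presented by generators $e_1,\dots,e_{n-1}$, $z_1,\dots,z_{n-1}$ and relations: $e_i^2=e_i$, $e_ie_j=e_je_i$; $z_iz_jz_i=z_jz_iz_j$ if $|i-j|=1$, $z_iz_j=z_jz_i$ if $|i-j|>1$; $e_iz_i=z_i$; $e_iz_j=z_je_i$; $z_i^2=e_i+(q-q^{-1})z_i$. *)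

(* Defs.v *)
From HB Require Import structures.
From mathcomp Require Import all_boot all_order all_algebra.
Set Implicit Arguments. Unset Strict Implicit. Unset Printing Implicit Defensive.
Import GRing.Theory.
Local Open Scope ring_scope.

(* Indices i = 1..n-1 of the paper are represented 0-based by 'I_(n.-1). *)
Definition adj (i j : nat) : bool := (i.+1 == j) || (j.+1 == i).
Definition far (i j : nat) : bool := (i.+1 < j)%N || (j.+1 < i)%N.

Section Rels.
Variables (R : comUnitRingType) (q : R) (n : nat).
Notation I := 'I_(n.-1).

Definition bH_rel (A : algType R) (e z : I -> A) : Prop :=
  ((forall i, e i * e i = e i)
   /\ (forall i j, e i * e j = e j * e i)
   /\ (forall i j : I, adj i j -> z i * z j * z i = z j * z i * z j)
   /\ (forall i j : I, far i j -> z i * z j = z j * z i)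
   /\ (forall i, e i * z i = z i)
   /\ (forall i j, e i * z j = z j * e i)
   /\ (forall i, z i * z i = e i + (q - q^-1) *: z i)).

Definition steinberg (A : algType R) (e z : I -> A) (i j : I) : A :=
  e i * e j * (1 + q *: z i + q *: z j + (q ^+ 2) *: (z i * z j)
               + (q ^+ 2) *: (z j * z i) + (q ^+ 3) *: (z i * z j * z i)).

Definition bTL_rel (A : algType R) (e z : I -> A) : Prop :=
  bH_rel e z /\ (forall i j : I, adj i j -> steinberg e z i j = 0).

Definition bTLd_rel (A : algType R) (e d : I -> A) : Prop :=
  ((forall i, e i * e i = e i)
   /\ (forall i j, e i * e j = e j * e i)
   /\ (forall i, d i * d i = (q + q^-1) *: d i)
   /\ (forall i j : I, adj i j -> d i * d j * d i = e j * d i * e j)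
   /\ (forall i j : I, far i j -> d i * d j = d j * d i)
   /\ (forall i, d i * e i = d i)
   /\ (forall i j, d i * e j = e j * d i)).

Definition presented_by (B : algType R)
    (P : forall A : algType R, (I -> A) -> (I -> A) -> Prop) (x y : I -> B) : Prop :=
  P B x y /\
  forall (A : algType R) (a b : I -> A), P A a b ->
    (exists f : {lrmorphism B -> A}, forall i, f (x i) = a i /\ f (y i) = b i) /\
    (forall f g : {lrmorphism B -> A},
        (forall i, f (x i) = a i /\ f (y i) = b i) ->
        (forall i, g (x i) = a i /\ g (y i) = b i) -> f =1 g).

End Rels.

(* Main.v *)
Require Import Defs.
From HB Require Import structures.
From mathcomp Require Import all_boot all_order all_algebra.
From mathcomp Require Import ring.
Import GRing.Theory.
Local Open Scope ring_scope.
Set Implicit Arguments. Unset Strict Implicit.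

Section LC.
Variables (R : comUnitRingType) (V : lmodType R).
Definition lc_def (m1 m2 m3 m4 m5 m6 m7 m8 : V) (a1 a2 a3 a4 a5 a6 a7 a8 : R) : V :=
  a1 *: m1 + a2 *: m2 + a3 *: m3 + a4 *: m4 + a5 *: m5 + a6 *: m6 + a7 *: m7 + a8 *: m8.
Definition lc := locked lc_def.
Lemma lcE : lc = lc_def. Proof. by rewrite /lc -lock. Qed.
Variables (m1 m2 m3 m4 m5 m6 m7 m8 : V).
Lemma lcD a1 a2 a3 a4 a5 a6 a7 a8 b1 b2 b3 b4 b5 b6 b7 b8 :
  lc m1 m2 m3 m4 m5 m6 m7 m8 a1 a2 a3 a4 a5 a6 a7 a8 + lc m1 m2 m3 m4 m5 m6 m7 m8 b1 b2 b3 b4 b5 b6 b7 b8 = lc m1 m2 m3 m4 m5 m6 m7 m8 (a1 + b1) (a2 + b2) (a3 + b3) (a4 + b4) (a5 + b5) (a6 + b6) (a7 + b7) (a8 + b8).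
Proof. by rewrite lcE /lc_def !scalerDl; do 7! (rewrite addrACA; congr (_ + _)). Qed.
Lemma lcZ c a1 a2 a3 a4 a5 a6 a7 a8 :
  c *: lc m1 m2 m3 m4 m5 m6 m7 m8 a1 a2 a3 a4 a5 a6 a7 a8 = lc m1 m2 m3 m4 m5 m6 m7 m8 (c * a1) (c * a2) (c * a3) (c * a4) (c * a5) (c * a6) (c * a7) (c * a8).
Proof. by rewrite lcE /lc_def !scalerDr !scalerA. Qed.
Lemma lcN a1 a2 a3 a4 a5 a6 a7 a8 :
  - lc m1 m2 m3 m4 m5 m6 m7 m8 a1 a2 a3 a4 a5 a6 a7 a8 = lc m1 m2 m3 m4 m5 m6 m7 m8 (- a1) (- a2) (- a3) (- a4) (- a5) (- a6) (- a7) (- a8).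
Proof. by rewrite -scaleN1r lcZ !mulN1r. Qed.
Lemma lc_1 : m1 = lc m1 m2 m3 m4 m5 m6 m7 m8 1 0 0 0 0 0 0 0.
Proof. by rewrite lcE /lc_def !scale0r ?addr0 ?add0r scale1r. Qed.
Lemma lc_2 : m2 = lc m1 m2 m3 m4 m5 m6 m7 m8 0 1 0 0 0 0 0 0.
Proof. by rewrite lcE /lc_def !scale0r ?addr0 ?add0r scale1r. Qed.
Lemma lc_3 : m3 = lc m1 m2 m3 m4 m5 m6 m7 m8 0 0 1 0 0 0 0 0.
Proof. by rewrite lcE /lc_def !scale0r ?addr0 ?add0r scale1r. Qed.
Lemma lc_4 : m4 = lc m1 m2 m3 m4 m5 m6 m7 m8 0 0 0 1 0 0 0 0.
Proof. by rewrite lcE /lc_def !scale0r ?addr0 ?add0r scale1r. Qed.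
Lemma lc_5 : m5 = lc m1 m2 m3 m4 m5 m6 m7 m8 0 0 0 0 1 0 0 0.
Proof. by rewrite lcE /lc_def !scale0r ?addr0 ?add0r scale1r. Qed.
Lemma lc_6 : m6 = lc m1 m2 m3 m4 m5 m6 m7 m8 0 0 0 0 0 1 0 0.
Proof. by rewrite lcE /lc_def !scale0r ?addr0 ?add0r scale1r. Qed.
Lemma lc_7 : m7 = lc m1 m2 m3 m4 m5 m6 m7 m8 0 0 0 0 0 0 1 0.
Proof. by rewrite lcE /lc_def !scale0r ?addr0 ?add0r scale1r. Qed.
Lemma lc_8 : m8 = lc m1 m2 m3 m4 m5 m6 m7 m8 0 0 0 0 0 0 0 1.
Proof. by rewrite lcE /lc_def !scale0r ?addr0 ?add0r scale1r. Qed.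
Lemma lc_congr a1 a2 a3 a4 a5 a6 a7 a8 b1 b2 b3 b4 b5 b6 b7 b8 :
  a1 = b1 -> a2 = b2 -> a3 = b3 -> a4 = b4 -> a5 = b5 -> a6 = b6 -> a7 = b7 -> a8 = b8 ->
  lc m1 m2 m3 m4 m5 m6 m7 m8 a1 a2 a3 a4 a5 a6 a7 a8 = lc m1 m2 m3 m4 m5 m6 m7 m8 b1 b2 b3 b4 b5 b6 b7 b8.
Proof. by move=> -> -> -> -> -> -> -> ->. Qed.
End LC.

Ltac lcfin m1 m2 m3 m4 m5 m6 m7 m8 :=
  let F := fresh "F" in
  pose F := lc m1 m2 m3 m4 m5 m6 m7 m8;
  let h1 := fresh "h" in have h1 : m1 = F 1 0 0 0 0 0 0 0 := lc_1 m1 m2 m3 m4 m5 m6 m7 m8;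
  let h2 := fresh "h" in have h2 : m2 = F 0 1 0 0 0 0 0 0 := lc_2 m1 m2 m3 m4 m5 m6 m7 m8;
  let h3 := fresh "h" in have h3 : m3 = F 0 0 1 0 0 0 0 0 := lc_3 m1 m2 m3 m4 m5 m6 m7 m8;
  let h4 := fresh "h" in have h4 : m4 = F 0 0 0 1 0 0 0 0 := lc_4 m1 m2 m3 m4 m5 m6 m7 m8;
  let h5 := fresh "h" in have h5 : m5 = F 0 0 0 0 1 0 0 0 := lc_5 m1 m2 m3 m4 m5 m6 m7 m8;
  let h6 := fresh "h" in have h6 : m6 = F 0 0 0 0 0 1 0 0 := lc_6 m1 m2 m3 m4 m5 m6 m7 m8;
  let h7 := fresh "h" in have h7 : m7 = F 0 0 0 0 0 0 1 0 := lc_7 m1 m2 m3 m4 m5 m6 m7 m8;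
  let h8 := fresh "h" in have h8 : m8 = F 0 0 0 0 0 0 0 1 := lc_8 m1 m2 m3 m4 m5 m6 m7 m8;
  rewrite ?h1 ?h2 ?h3 ?h4 ?h5 ?h6 ?h7 ?h8 {h1 h2 h3 h4 h5 h6 h7 h8} /F;
  rewrite !(lcD, lcZ, lcN); apply: lc_congr.

Tactic Notation "qfin" constr(q) constr(hq) uconstr(K) := apply/eqP; rewrite -subr_eq0; apply/eqP;
  transitivity ((q * q^-1 - 1) * K); [ring | by rewrite mulrV // subrr mul0r].

Lemma sAl (R : comUnitRingType) (A : algType R) (k : R) (x y : A) : k *: x * y = k *: (x * y).
Proof. by rewrite scalerAl. Qed.
Lemma sAr (R : comUnitRingType) (A : algType R) (k : R) (x y : A) : x * (k *: y) = k *: (x * y).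
Proof. by rewrite scalerAr. Qed.

Section Base.
Variables (R : comUnitRingType) (q : R) (hq : q \is a GRing.unit) (A : algType R).
Variables (n : nat) (e z : 'I_(n.-1) -> A).
Hypothesis Hee : forall i, e i * e i = e i.
Hypothesis Hec : forall i j, e i * e j = e j * e i.
Hypothesis Hez : forall i j, e i * z j = z j * e i.
Hypothesis Hezi : forall i, e i * z i = z i.
Hypothesis Hzz : forall i, z i * z i = e i + (q - q^-1) *: z i.
Let d i := q^-1 *: e i + z i.
Lemma Hzei i : z i * e i = z i. Proof. by rewrite -Hez Hezi. Qed.

Lemma d_sq i : d i * d i = (q + q^-1) *: d i.
Proof.
rewrite /d !mulrDl !mulrDr -!scalerAl -!scalerAr Hee Hezi Hzei Hzz.
lcfin (e i) (z i) (0:A) (0:A) (0:A) (0:A) (0:A) (0:A).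
all: try ring.
qfin q hq (- (1%:R * (1))).
Qed.

Section Pair.
Variables i j : 'I_(n.-1).
Let E := e i * e j.
Lemma F1 : E * z i = e j * z i.
Proof. by rewrite /E Hec -mulrA Hezi. Qed.
Lemma n1 : e i * e j * e i = E.
Proof. by rewrite -mulrA (Hec j i) mulrA Hee. Qed.
Lemma n2 : e i * z j * e i = E * z j.
Proof. by rewrite /E -!mulrA -(Hez i j) Hezi mulrA Hee. Qed.
Lemma n3 : e i * z j * z i = E * (z j * z i).
Proof. by rewrite /E !mulrA -(mulrA (e i) (e j)) Hezi. Qed.
Lemma n4 : z i * e j * e i = E * z i.
Proof. by rewrite F1 -Hez -mulrA Hzei. Qed.
Lemma n5 : z i * e j * z i = E + (q - q^-1) *: (E * z i).
Proof. by rewrite F1 -Hez -mulrA Hzz mulrDr -scalerAr /E Hec. Qed.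
Lemma G1 k x : e k * (z k * x) = z k * x.
Proof. by rewrite mulrA Hezi. Qed.
Lemma G3 k l x : e k * (z l * x) = z l * (e k * x).
Proof. by rewrite mulrA Hez mulrA. Qed.
Lemma n6 : z i * z j * e i = E * (z i * z j).
Proof. by rewrite /E -!mulrA (G3 j i) Hezi G1 -(Hez i j) mulrA Hzei. Qed.
Lemma n7 : z i * z j * z i = E * (z i * z j * z i).
Proof. by rewrite /E -!mulrA (G3 j i) G1 G1. Qed.
Lemma n8 : e j * e i * e j = E.
Proof. by rewrite -mulrA (Hec i j) mulrA Hee Hec. Qed.
Lemma n9 : e j * z i * e j = E * z i.
Proof. by rewrite F1 -mulrA -Hez mulrA Hee. Qed.

Lemma key : q ^+ 3 *: (d i * d j * d i - e j * d i * e j) = steinberg q e z i j.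
Proof.
rewrite /d.
rewrite !(mulrDl, mulrDr, mulrBl, mulrBr, sAl, sAr).
rewrite n1 n2 n3 n4 n5 n6 n7 n8 n9 /steinberg -/E.
rewrite !(mulrDl, mulrDr, mulrBl, mulrBr, sAl, sAr) mulr1.
lcfin (E * (z i * z j * z i)) (E * (z i * z j)) (E * (z j * z i)) (E * z i) (E * z j) E (0:A) (0:A).
all: try ring.
qfin q hq ((1%:R * (q ^+ 2))).
qfin q hq ((1%:R * (q ^+ 2))).
qfin q hq ((1%:R * (q)) + (1%:R * (q ^+ 2 * q^-1)) + (1%:R * (q ^+ 3))).
qfin q hq ((1%:R * (q)) + (1%:R * (q ^+ 2 * q^-1))).
qfin q hq ((1%:R * (1)) + (1%:R * (q * q^-1)) + (1%:R * (q ^+ 2 * q^-1 ^+ 2))).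
Qed.
End Pair.

Lemma d_e i : d i * e i = d i.
Proof. by rewrite /d mulrDl sAl Hee Hzei. Qed.

Lemma d_ej i j : d i * e j = e j * d i.
Proof. by rewrite /d mulrDl mulrDr sAl sAr (Hec i j) (Hez j i). Qed.

Lemma d_far i j : z i * z j = z j * z i -> d i * d j = d j * d i.
Proof.
move=> H; rewrite /d !(mulrDl, mulrDr, sAl, sAr).
rewrite (Hec i j) (Hez i j) -(Hez j i) H.
lcfin (e j * e i) (z j * e i) (e j * z i) (z j * z i) (0:A) (0:A) (0:A) (0:A).
all: ring.
Qed.

Lemma key' (d' : 'I_(n.-1) -> A) (hd : forall k, d' k = q^-1 *: e k + z k) i j :
  q ^+ 3 *: (d' i * d' j * d' i - e j * d' i * e j) = steinberg q e z i j.
Proof. rewrite !hd; exact: key. Qed.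

Lemma st_anti i j :
  steinberg q e z i j - steinberg q e z j i
  = q ^+ 3 *: (z i * z j * z i - z j * z i * z j).
Proof.
rewrite (n7 i j) (n7 j i) (Hec j i) /steinberg (Hec j i).
rewrite !(mulrDl, mulrDr, mulrBl, mulrBr, sAl, sAr) !mulr1.
lcfin (e i * e j * (z i * z j * z i)) (e i * e j * (z j * z i * z j)) (e i * e j * (z i * z j))
  (e i * e j * (z j * z i)) (e i * e j * z i) (e i * e j * z j) (e i * e j) (0:A).
all: ring.
Qed.
End Base.

Section Rev.
Variables (R : comUnitRingType) (q : R) (hq : q \is a GRing.unit) (A : algType R).
Variables (n : nat) (e d : 'I_(n.-1) -> A).
Hypothesis Dee : forall i, e i * e i = e i.
Hypothesis Dec : forall i j, e i * e j = e j * e i.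
Hypothesis Dsq : forall i, d i * d i = (q + q^-1) *: d i.
Hypothesis Dde : forall i, d i * e i = d i.
Hypothesis Dce : forall i j, d i * e j = e j * d i.
Let z i := d i - q^-1 *: e i.
Lemma Rez i j : e i * z j = z j * e i.
Proof. by rewrite /z mulrBr mulrBl sAr sAl -(Dce j i) (Dec i j). Qed.
Lemma Rezi i : e i * z i = z i.
Proof. by rewrite /z mulrBr sAr -(Dce i i) Dde Dee. Qed.
Lemma Rzz i : z i * z i = e i + (q - q^-1) *: z i.
Proof.
rewrite /z !(mulrDl, mulrDr, mulrBl, mulrBr, mulrN, mulNr, sAl, sAr) Dsq Dde -(Dce i i) Dde Dee.
lcfin (d i) (e i) (0:A) (0:A) (0:A) (0:A) (0:A) (0:A).
all: try ring.
qfin q hq (1).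
Qed.
Lemma Rfar i j : d i * d j = d j * d i -> z i * z j = z j * z i.
Proof.
move=> H; rewrite /z !(mulrDl, mulrDr, mulrBl, mulrBr, mulrN, mulNr, sAl, sAr).
rewrite H (Dce i j) (Dce j i) (Dec i j).
lcfin (d j * d i) (e j * d i) (e i * d j) (e j * e i) (0:A) (0:A) (0:A) (0:A).
all: ring.
Qed.
End Rev.

Lemma scale_q3 (R : comUnitRingType) (q : R) (hq : q \is a GRing.unit) (A : algType R) (X : A) :
  q ^+ 3 *: X = 0 -> X = 0.
Proof.
move=> h; rewrite -[X]scale1r -(mulVr (unitrX 3 hq)) -scalerA h scaler0 //.
Qed.


Lemma adj_sym (i j : nat) : adj i j -> adj j i.
Proof. by rewrite /adj orbC. Qed.

Lemma toD (R : comUnitRingType) (q : R) (hq : q \is a GRing.unit) (A : algType R)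
  (n : nat) (e z : 'I_(n.-1) -> A) :
  @bTL_rel R q n A e z -> @bTLd_rel R q n A e (fun i => q^-1 *: e i + z i).
Proof.
case=> [[Hee [Hec [Hbr [Hfar [Hezi [Hez Hzz]]]]]] Hst].
split; first exact: Hee. split; first exact: Hec.
split; first by move=> i; exact: (d_sq hq Hee Hez Hezi Hzz).
split.
  move=> i j hij.
  have K := key' hq Hee Hec Hez Hezi Hzz (d' := fun i => q^-1 *: e i + z i) (fun k => erefl) i j.
  rewrite Hst // in K.
  by apply/eqP; rewrite -subr_eq0; apply/eqP; exact: (scale_q3 hq).
split; first by move=> i j hij; apply: (d_far q Hec Hez); exact: Hfar.
split; first by move=> i; exact: (d_e q Hee Hez Hezi).
by move=> i j; exact: (d_ej q Hec Hez).
Qed.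

Lemma toZ (R : comUnitRingType) (q : R) (hq : q \is a GRing.unit) (A : algType R)
  (n : nat) (e d : 'I_(n.-1) -> A) :
  @bTLd_rel R q n A e d -> @bTL_rel R q n A e (fun i => d i - q^-1 *: e i).
Proof.
case=> [Dee [Dec [Dsq [Dadj [Dfar [Dde Dce]]]]]].
set z := fun i => d i - q^-1 *: e i.
have Hez : forall i j, e i * z j = z j * e i by exact: (Rez q Dec Dce).
have Hezi : forall i, e i * z i = z i by exact: (Rezi q Dee Dde Dce).
have Hzz : forall i, z i * z i = e i + (q - q^-1) *: z i by exact: (Rzz hq Dee Dsq Dde Dce).
have hd : forall k, d k = q^-1 *: e k + z k by move=> k; rewrite /z addrC subrK.
have Hst : forall i j : 'I_(n.-1), adj i j -> steinberg q e z i j = 0.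
  by move=> i j hij; rewrite -(key' hq Dee Dec Hez Hezi Hzz hd) Dadj // subrr scaler0.
split; last exact: Hst.
split; first exact: Dee. split; first exact: Dec.
split.
  move=> i j hij; have := st_anti q Dec Hez Hezi i j.
  rewrite (Hst i j hij).
  rewrite (Hst j i (adj_sym hij)).
  rewrite subrr.
  move=> /esym /(scale_q3 hq) /eqP.
  by rewrite subr_eq0 => /eqP.
split; first by move=> i j hij; apply: (Rfar q Dec Dce); exact: Dfar.
split; first exact: Hezi.
by split.
Qed.

Unset Implicit Arguments.

Theorem proposition6p1 (R : comUnitRingType) (q : R) (hq : q \is a GRing.unit)
    (n : nat) (B : algType R) (e z : 'I_(n.-1) -> B) :
  presented_by (@bTL_rel R q n) e z ->
  presented_by (@bTLd_rel R q n) e (fun i => q^-1 *: e i + z i).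
Proof.
case=> HB HU; split; first exact: toD.
move=> A a b Hab.
have Hz := toZ hq Hab.
have [[f hf] Hun] := HU A a _ Hz.
split.
  exists f => i; have [h1 h2] := hf i; split=> //=.
  by rewrite raddfD /= linearZ /= h1 h2 addrC subrK.
move=> f1 g1 hf1 hg1; apply: Hun => i.
  have [h1 h2] := hf1 i; split=> //=.
  have -> : z i = (q^-1 *: e i + z i) - q^-1 *: e i by rewrite addrC addKr.
  by rewrite raddfB /= linearZ /= h1 h2.
have [h1 h2] := hg1 i; split=> //=.
have -> : z i = (q^-1 *: e i + z i) - q^-1 *: e i by rewrite addrC addKr.
by rewrite raddfB /= linearZ /= h1 h2.
Qed.
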